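(* Let $\mathbf w_1,\dots,\mathbf w_K\in\mathbb R^d$ ($K\ge2$) and $k\in[K]$ with $\mathbf w_k\notin\operatorname{conv}(\{\mathbf w_j\}_{j\in[K]\setminus\{k\}})$. Then the problems $$\min_{\mathbf h\in\mathbb S^{d-1}}\max_{k'\ne k}\langle\mathbf w_{k'}-\mathbf w_k,\mathbf h\rangle\quad\text{and}\quad\min_{\|\mathbf h\|_2\le1}\max_{k'\ne k}\langle\mathbf w_{k'}-\mathbf w_k,\mathbf h\rangle$$ are equivalent, i.e. they have the same optimal solutions.
   Context: $\mathbb S^{d-1}$ is the unit sphere in $\mathbb R^d$; $\operatorname{conv}$ denotes convex hull. *)

(* Defs.v *)
From mathcomp Require Import all_boot all_order all_algebra.
From mathcomp Require Import all_classical all_reals ereal.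
Set Implicit Arguments. Unset Strict Implicit. Unset Printing Implicit Defensive.
Import Order.TTheory GRing.Theory Num.Theory.
Local Open Scope ring_scope.

Definition dotp (R : realType) (d : nat) (u v : 'rV[R]_d) : R :=
  \sum_(i < d) u ord0 i * v ord0 i.

Definition norm2 (R : realType) (d : nat) (h : 'rV[R]_d) : R :=
  Num.sqrt (dotp h h).

Definition in_conv (R : realType) (d K : nat) (P : pred 'I_K)
    (w : 'I_K -> 'rV[R]_d) (x : 'rV[R]_d) : Prop :=
  exists lam : 'I_K -> R,
    [/\ forall j, 0 <= lam j,
        forall j, ~~ P j -> lam j = 0,
        \sum_(j < K) lam j = 1 &
        x = \sum_(j < K) lam j *: w j].

(* Objective  h |-> max_{k' <> k} <w_k' - w_k, h>  (max in \bar R, finite since K >= 2). *)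
Definition obj (R : realType) (d K : nat) (w : 'I_K -> 'rV[R]_d) (k : 'I_K)
    (h : 'rV[R]_d) : \bar R :=
  \big[maxe/-oo%E]_(j < K | j != k) (dotp (w j - w k) h)%:E.

Definition is_argmin (R : realType) (d : nat) (S : 'rV[R]_d -> Prop)
    (f : 'rV[R]_d -> \bar R) (h : 'rV[R]_d) : Prop :=
  S h /\ forall h', S h' -> (f h <= f h')%E.

(* Main.v *)
Require Import Defs.
From mathcomp Require Import all_boot all_order all_algebra.
From mathcomp Require Import all_classical all_reals ereal.
From mathcomp Require Import ring lra.
Import Order.TTheory GRing.Theory Num.Theory.
Local Open Scope ring_scope.
Section S.
Variable R : realType.
Variable d : nat.
Implicit Types u v x : 'rV[R]_d.

Lemma dotpC u v : dotp u v = dotp v u.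
Proof. by apply: eq_bigr => i _; rewrite mulrC. Qed.
Lemma dotpDr u v x : dotp u (v + x) = dotp u v + dotp u x.
Proof. by rewrite /dotp -big_split; apply: eq_bigr => i _; rewrite mxE mulrDr. Qed.
Lemma dotpZr u v (t : R) : dotp u (t *: v) = t * dotp u v.
Proof. by rewrite /dotp mulr_sumr; apply: eq_bigr => i _; rewrite mxE mulrCA. Qed.
Lemma dotpNr u v : dotp u (- v) = - dotp u v.
Proof. by rewrite -scaleN1r dotpZr mulN1r. Qed.
Lemma dotp0r u : dotp u 0 = 0.
Proof. by rewrite /dotp big1 // => i _; rewrite mxE mulr0. Qed.
Lemma dotpDl u v x : dotp (v + x) u = dotp v u + dotp x u.
Proof. by rewrite dotpC dotpDr dotpC (dotpC x). Qed.
Lemma dotpZl u v (t : R) : dotp (t *: v) u = t * dotp v u.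
Proof. by rewrite dotpC dotpZr dotpC. Qed.
Lemma dotpNl u v : dotp (- v) u = - dotp v u.
Proof. by rewrite dotpC dotpNr dotpC. Qed.
Lemma dotp0l u : dotp 0 u = 0.
Proof. by rewrite dotpC dotp0r. Qed.
Lemma dotpBl u v x : dotp (v - x) u = dotp v u - dotp x u.
Proof. by rewrite dotpDl dotpNl. Qed.
Lemma dotpBr u v x : dotp u (v - x) = dotp u v - dotp u x.
Proof. by rewrite dotpDr dotpNr. Qed.
Lemma dotp_suml m (F : 'I_m -> 'rV[R]_d) u :
  dotp (\sum_(j < m) F j) u = \sum_(j < m) dotp (F j) u.
Proof. by apply: (big_morph (fun v => dotp v u)) => [v x|]; [apply: dotpDl|apply: dotp0l]. Qed.
Lemma dotp_ge0 u : 0 <= dotp u u.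
Proof. by apply: sumr_ge0 => i _; rewrite -expr2 sqr_ge0. Qed.
Lemma dotp_eq0 u : dotp u u = 0 -> u = 0.
Proof.
move=> H.
have E : dotp u u = \sum_(i < d) u ord0 i ^+ 2.
  by apply: eq_bigr => i _; rewrite expr2.
rewrite E in H.
have H2 := psumr_eq0P (fun i _ => sqr_ge0 (u ord0 i)) H.
apply/matrixP => i j; rewrite (ord1 i) mxE.
by have /eqP := H2 j isT; rewrite sqrf_eq0 => /eqP.
Qed.
Lemma norm2Z u (t : R) : norm2 (t *: u) = `|t| * norm2 u.
Proof. by rewrite /norm2 dotpZl dotpZr mulrA -expr2 sqrtrM ?sqr_ge0 // sqrtr_sqr. Qed.
Lemma norm2_ge0 u : 0 <= norm2 u.
Proof. exact: sqrtr_ge0. Qed.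
Lemma norm2_eq0 u : norm2 u = 0 -> u = 0.
Proof.
move=> /eqP; rewrite /norm2 sqrtr_eq0 => H; apply: dotp_eq0.
by apply/eqP; rewrite eq_le H dotp_ge0.
Qed.

Lemma between m (x : 'I_m -> R) L : (forall j, x j < L) -> exists s, s < L /\ forall j, x j < s.
Proof.
move=> H; set M := \big[Num.max/(L-1)]_(j < m) x j.
have ML : M < L.
  apply/bigmax_ltP; split => //; first by rewrite ltrBlDr ltrDl.
exists ((M + L) / 2); split; first by lra.
move=> j; have : x j <= M by apply: le_bigmax_cond.
lra.
Qed.
Lemma bound m (x : 'I_m -> R) : exists M, 0 < M /\ forall j, x j <= M.
Proof.
set M := \big[Num.max/1]_(j < m) x j.
exists M; split; last by move=> j; apply: le_bigmax_cond.
by apply: lt_le_trans (bigmax_ge_id _ _ _ _); rewrite ltr01.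
Qed.

Lemma divlt (a b x y : R) : 0 < a -> 0 < b -> a * x + b * y < 0 -> x / b < - y / a.
Proof.
move=> a0 b0 H; rewrite ltr_pdivrMr // mulrAC ltr_pdivlMr //; nra.
Qed.

Lemma gordan m (a : 'I_m -> 'rV[R]_d) :
  (exists h, forall j, dotp (a j) h < 0) \/
  (exists mu : 'I_m -> R, (forall j, 0 <= mu j) /\ \sum_(j < m) mu j = 1 /\
      \sum_(j < m) mu j *: a j = 0).
Proof.
elim: m a => [|m IH] a; first by left; exists 0; case.
set c := a ord0; set b := fun j : 'I_m => a (lift ord0 j).
case: (IH b) => [[h0 Hh0]|[mu [mu0 [mu1 muS]]]]; last first.
  right; exists (fun j => if unlift ord0 j is Some j' then mu j' else 0).
  split; first by move=> j; case: (unliftP ord0 j) => [j' _|_].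
  split.
    rewrite big_ord_recl unlift_none add0r; under eq_bigr do rewrite liftK.
    exact: mu1.
  rewrite big_ord_recl unlift_none scale0r add0r; under eq_bigr do rewrite liftK.
  exact: muS.
set al := dotp c h0.
have [alneg|alnn] := ltP al 0.
  by left; exists h0 => j; case: (unliftP ord0 j) => [j' ->|->] //; apply: Hh0.
have [c0|cn0] := eqVneq c 0.
  right; exists (fun j => (j == ord0)%:R); split; first by move=> j; rewrite ler0n.
  split.
    by rewrite big_ord_recl eqxx big1 ?addr0 // => j _; rewrite eq_sym (negbTE (neq_lift _ _)).
  rewrite big_ord_recl eqxx scale1r big1 ?addr0 // => j _.
  by rewrite eq_sym (negbTE (neq_lift _ _)) scale0r.
have cc : 0 < dotp c c.
  rewrite lt_def dotp_ge0 andbT; apply/eqP => /dotp_eq0 E; by rewrite E eqxx in cn0.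
have [alpos|alle] := ltP 0 al; last first.
  have al0 : al = 0 by apply/le_anti; rewrite alle alnn.
  have [M [M0 HM]] := @bound m (fun j => - dotp (b j) c / (- dotp (b j) h0)).
  left; exists (h0 - (2 * M)^-1 *: c) => j.
  have t0 : 0 < (2 * M)^-1 by rewrite invr_gt0; lra.
  have tM : (2 * M)^-1 * M = 1/2.
    by rewrite invfM -mulrA mulVf ?mulr1 ?div1r // gt_eqF.
  case: (unliftP ord0 j) => [j' ->|->]; rewrite dotpBr dotpZr.
    have := HM j'; have := Hh0 j'; rewrite /b /=.
    set p := dotp _ h0; set q := dotp _ c => p0.
    rewrite ler_pdivrMr; last by lra.
    move=> Hq; nra.
  rewrite -/c -/al al0; nra.
pose bet j := - dotp (b j) h0.
have bet0 j : 0 < bet j by rewrite /bet oppr_gt0; apply: Hh0.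
pose b' j := al *: b j + bet j *: c.
case: (IH b') => [[g Hg]|[mu [mu0 [mu1 muS]]]].
  have Hx : forall j, (fun j => dotp (b j) g / bet j) j < - dotp c g / al.
    move=> j; apply: divlt => //; have := Hg j.
    by rewrite /b' dotpDl !dotpZl.
  have [s [sL Hs]] := @between m _ _ Hx.
  left; exists (g + s *: h0) => j; case: (unliftP ord0 j) => [j' ->|->]; rewrite dotpDr dotpZr.
    have := Hs j'; rewrite ltr_pdivrMr // /bet /b /= => H; nra.
  by move: sL; rewrite ltr_pdivlMr // -/c -/al => H; lra.
set T := \sum_(j < m) mu j * bet j.
have T0 : 0 <= T by apply: sumr_ge0 => j _; apply: mulr_ge0 => //; apply: ltW.
set S := al + T.
have S0 : 0 < S by rewrite /S; lra.
right; exists (fun j => if unlift ord0 j is Some j' then al * mu j' / S else T / S).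
split.
  move=> j; case: (unliftP ord0 j) => [j' _|_]; apply: divr_ge0; try apply: mulr_ge0; by [|apply: ltW].
split.
  rewrite big_ord_recl unlift_none; under eq_bigr do rewrite liftK.
  rewrite -mulr_suml -mulr_sumr mu1 mulr1 -mulrDl [T + al]addrC divff //.
  by apply: lt0r_neq0.
rewrite big_ord_recl unlift_none; under eq_bigr do rewrite liftK.
have E : \sum_(j < m) mu j *: b' j = al *: \sum_(j < m) mu j *: b j + T *: c.
  rewrite /b' /=; under eq_bigr do rewrite scalerDr.
  rewrite big_split /= scaler_sumr /T scaler_suml; congr (_ + _); apply: eq_bigr => i _.
    by rewrite !scalerA mulrC.
  by rewrite scalerA.
rewrite muS in E.
have -> : \sum_(i < m) (al * mu i / S) *: a (lift ord0 i) = (S^-1 * al) *: \sum_(j < m) mu j *: b j.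
  rewrite scaler_sumr; apply: eq_bigr => i _; rewrite scalerA; congr (_ *: _).
  by rewrite mulrC mulrA.
by rewrite (mulrC T) -!scalerA -scalerDr addrC -E scaler0.
Qed.
End S.
Arguments norm2_eq0 {R d u}.

Section Main.
Variables (R : realType) (d K : nat) (w : 'I_K -> 'rV[R]_d) (k k2 : 'I_K).
Hypothesis k2k : k2 != k.

Let x j h := dotp (w j - w k) h.
Let f h := fine (obj w k h).

Lemma objP h : obj w k h = (f h)%:E /\ (forall j, j != k -> x j h <= f h) /\
   exists2 j, j != k & f h = x j h.
Proof.
have [j Pj E] := eq_bigmax (x := -oo%E) k2 (fun j => j != k)
   (fun j => (dotp (w j - w k) h)%:E) k2k (fun i _ => leNye _).
have fE : f h = x j h by rewrite /f /obj E.
have oE : obj w k h = (f h)%:E by rewrite fE /obj E.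
split => //; split; last by exists j.
move=> j' Pj'; rewrite -lee_fin -oE; by rewrite /obj (bigD1 j') //= le_max lexx.
Qed.

Lemma fZ (t : R) h : 0 <= t -> f (t *: h) = t * f h.
Proof.
move=> t0; have [_ [ub1 [j1 P1 E1]]] := objP (t *: h).
have [_ [ub2 [j2 P2 E2]]] := objP h.
apply/le_anti/andP; split.
  by rewrite E1 /x dotpZr ler_wpM2l // ub2.
by rewrite E2 /x -dotpZr ub1.
Qed.

Lemma f0 : f 0 = 0.
Proof. by rewrite -(scale0r (0 : 'rV[R]_d)) fZ // mul0r. Qed.

Lemma obj_le h h' : (obj w k h <= obj w k h')%E <-> f h <= f h'.
Proof.
have [E1 _] := objP h; have [E2 _] := objP h'.
by rewrite E1 E2 lee_fin.
Qed.
End Main.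

Theorem mainTheorem13 (R : realType) (d K : nat) (w : 'I_K -> 'rV[R]_d)
    (k : 'I_K) (hK : (2 <= K)%N)
    (hnc : ~ in_conv (fun j => j != k) w (w k)) :
  forall h : 'rV[R]_d,
    is_argmin (fun h' => norm2 h' = 1) (obj w k) h <->
    is_argmin (fun h' => norm2 h' <= 1) (obj w k) h.
Proof.
have [k2 k2k] : exists k2 : 'I_K, k2 != k.
  have K0 : (0 < K)%N by apply: leq_trans hK.
  have K1 : (1 < K)%N := hK.
  case: (eqVneq k (Ordinal K0)) => [->|H]; last by exists (Ordinal K0); rewrite eq_sym.
  by exists (Ordinal K1).
have objP' := @objP R d K w k k2 k2k.
have fZ' := @fZ R d K w k k2 k2k.
have f0' := @f0 R d K w k k2 k2k.
have obj_le' := @obj_le R d K w k k2 k2k.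
pose sig j := if j == k then k2 else j.
have [[h0 Hh0]|[mu [mu0 [mu1 muS]]]] := @gordan R d K (fun j => w (sig j) - w k); last first.
  exfalso; apply: hnc.
  pose lam j := if j == k then 0 else mu j + (if j == k2 then mu k else 0).
  have redis (V : lmodType R) (F : 'I_K -> V) :
      \sum_(j < K) lam j *: F j = \sum_(j < K) mu j *: F (sig j).
    rewrite (bigD1 k) //= /lam eqxx scale0r add0r [RHS](bigD1 k) //= /sig eqxx.
    under eq_bigr => j Hj do rewrite (negbTE Hj) scalerDl.
    rewrite big_split /= addrC; congr (_ + _); last first.
      by apply: eq_bigr => j Hj; rewrite (negbTE Hj).
    rewrite (bigD1 k2) //= eqxx big1 ?addr0 // => j /andP[_ Hj].
    by rewrite (negbTE Hj) scale0r.
  exists lam; split.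
  - move=> j; rewrite /lam; case: eqP => _ //; apply: addr_ge0 => //; by case: eqP.
  - by move=> j; rewrite negbK /lam => ->.
  - have := redis R^o (fun _ => 1); rewrite /=.
    change (\sum_(j < K) lam j * 1 = \sum_(j < K) mu j * 1 -> \sum_(j < K) lam j = 1).
    under eq_bigr do rewrite mulr1.
    under [X in _ = X -> _]eq_bigr do rewrite mulr1.
    by move=> ->.
  - rewrite redis.
    have {}muS : \sum_(j < K) (mu j *: w (sig j) - mu j *: w k) = 0.
      by apply: (etrans _ muS); apply: eq_bigr => j _; rewrite scalerBr.
    rewrite sumrB -scaler_suml mu1 scale1r in muS.
    by apply/esym/eqP; rewrite -subr_eq0; apply/eqP.
have n0 : fine (obj w k h0) < 0.
  have [_ [_ [j Pj ->]]] := objP' h0.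
  by have := Hh0 j; rewrite /sig (negbTE Pj).
have nh0 : 0 < norm2 h0.
  rewrite lt_def norm2_ge0 andbT; apply/eqP => /norm2_eq0 E.
  by move: n0; rewrite E f0' ltxx.
set u0 := (norm2 h0)^-1 *: h0.
have nu0 : norm2 u0 = 1.
  by rewrite norm2Z ger0_norm ?invr_ge0 ?ltW // mulVf // lt0r_neq0.
have fu0 : fine (obj w k u0) < 0.
  by rewrite fZ' ?invr_ge0 ?ltW // pmulr_rlt0 // invr_gt0.
move=> h; split.
- case=> Hn Hmin.
  have fh : fine (obj w k h) < 0.
    by apply: le_lt_trans (proj1 (obj_le' _ _) (Hmin u0 nu0)) fu0.
  split; first by rewrite Hn.
  move=> h' Hh'; apply/obj_le'.
  have [n0'|np] := eqVneq (norm2 h') 0.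
    by rewrite (norm2_eq0 n0') f0'; apply: ltW.
  have npos : 0 < norm2 h' by rewrite lt_def np norm2_ge0.
  set u := (norm2 h')^-1 *: h'.
  have nu : norm2 u = 1.
    by rewrite norm2Z ger0_norm ?invr_ge0 ?ltW // mulVf.
  have H := proj1 (obj_le' _ _) (Hmin u nu).
  have -> : h' = norm2 h' *: u by rewrite /u scalerA mulfV ?scale1r.
  rewrite fZ'; last exact: ltW.
  have A1 : 0 <= norm2 h' * (fine (obj w k u) - fine (obj w k h)).
    by apply: mulr_ge0; lra.
  have A2 : 0 <= (1 - norm2 h') * (- fine (obj w k h)).
    by apply: mulr_ge0; lra.
  nra.
- case=> Hn Hmin.
  have fh : fine (obj w k h) < 0.
    have le0 : norm2 u0 <= 1 by rewrite nu0.
    by apply: le_lt_trans (proj1 (obj_le' _ _) (Hmin u0 le0)) fu0.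
  have [n0'|np] := eqVneq (norm2 h) 0.
    by move: fh; rewrite (norm2_eq0 n0') f0' ltxx.
  have npos : 0 < norm2 h by rewrite lt_def np norm2_ge0.
  set u := (norm2 h)^-1 *: h.
  have nu : norm2 u = 1.
    by rewrite norm2Z ger0_norm ?invr_ge0 ?ltW // mulVf.
  have le1 : norm2 u <= 1 by rewrite nu.
  have H := proj1 (obj_le' _ _) (Hmin u le1).
  rewrite /u fZ' in H; last by rewrite invr_ge0 ltW.
  have H2 : norm2 h * fine (obj w k h) <= fine (obj w k h).
    by have := ler_wpM2l (ltW npos) H; rewrite mulrA mulfV // mul1r.
  have n1 : norm2 h = 1 by apply/le_anti; rewrite Hn /=; nra.
  split => // h' Hh'; apply: Hmin; by rewrite Hh'.
Qed.
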